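(* If $G$ is a finite group, then the group $\mathrm{Gr}(\mathrm{Pq}(G))$ is finite.
   Context: For a group $G$, $\mathrm{Pq}(G)$ is the power quandle on the underlying set of $G$ with $a\rhd b=aba^{-1}$, $\pi^n(a)=a^n$ ($n\in\mathbb{Z}$), and unit the identity $e$. $\mathrm{Gr}(\mathrm{Pq}(G))$ is the group with generators $\sigma(a)$, $a\in G$, and relations $\sigma(aba^{-1})=\sigma(a)\sigma(b)\sigma(a)^{-1}$, $\sigma(a^n)=\sigma(a)^n$, $\sigma(e)=1$ for all $a,b\in G$, $n\in\mathbb{Z}$. *)

(* Defs.v *)
From mathcomp Require Import all_boot all_fingroup.
Set Implicit Arguments. Unset Strict Implicit. Unset Printing Implicit Defensive.

Local Open Scope group_scope.

(* The group Gr(Pq(G)) is presented by generators sigma(a), a in G, and the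
   relations of the paper.  We model it as words in the letters
   sigma(a)^{+1} = (a, true) and sigma(a)^{-1} = (a, false), modulo the
   smallest congruence containing free cancellation and the relations. *)
Definition gr_word (gT : finGroupType) := seq (gT * bool).

Definition gr_flip (gT : finGroupType) (x : gT * bool) : gT * bool := (x.1, ~~ x.2).

Definition gr_pos (gT : finGroupType) (a : gT) (n : nat) : gr_word gT := nseq n (a, true).
Definition gr_neg (gT : finGroupType) (a : gT) (n : nat) : gr_word gT := nseq n (a, false).

Inductive gr_equiv (gT : finGroupType) : gr_word gT -> gr_word gT -> Prop :=
  | gr_refl w : gr_equiv w w
  | gr_sym u v : gr_equiv u v -> gr_equiv v u
  | gr_trans u v w : gr_equiv u v -> gr_equiv v w -> gr_equiv u w
  | gr_cat u u' v v' : gr_equiv u u' -> gr_equiv v v' -> gr_equiv (u ++ v) (u' ++ v')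
  | gr_free x : gr_equiv [:: x; gr_flip x] [::]
  | gr_conj (a b : gT) : gr_equiv [:: (a * b * a^-1, true)] [:: (a, true); (b, true); (a, false)]
  | gr_pow_pos (a : gT) (n : nat) : gr_equiv [:: (a ^+ n, true)] (gr_pos a n)
  | gr_pow_neg (a : gT) (n : nat) : gr_equiv [:: ((a ^+ n)^-1, true)] (gr_neg a n)
  | gr_unit : gr_equiv [:: (1, true)] [::].

Definition GrPq_finite (gT : finGroupType) : Prop :=
  exists s : seq (gr_word gT), forall w : gr_word gT, exists2 w', w' \in s & gr_equiv w w'.

(* Main.v *)
Require Import Defs.
From mathcomp Require Import all_boot all_fingroup.

Set Implicit Arguments. Unset Strict Implicit. Unset Printing Implicit Defensive.
Local Open Scope group_scope.

Lemma size_sum (T : finType) (s : seq T) : size s = (\sum_(x : T) count_mem x s)%N.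
Proof.
elim: s => [|y s IH] /=; first by rewrite big1.
rewrite big_split /= -IH.
rewrite (bigD1 y) //= eqxx big1 ?addn0 ?add1n //.
by move=> x /negbTE; rewrite eq_sym => ->.
Qed.

Lemma size_bound (T : finType) (s : seq T) k :
  (forall x, count_mem x s <= k)%N -> (size s <= #|T| * k)%N.
Proof.
move=> H; rewrite size_sum -sum_nat_const; apply: leq_sum => x _; exact: H.
Qed.

Section Proof.
Variable gT : finGroupType.
Implicit Types (u v w : gr_word gT) (a b c : gT).

Definition posw w := all (fun x : gT * bool => x.2) w.
Definition conjw c w : gr_word gT := map (fun x : gT * bool => (c * x.1 * c^-1, x.2)) w.

Lemma swap c b :
  gr_equiv [:: (c, true); (b, true)] [:: (c * b * c^-1, true); (c, true)].
Proof.
apply: (@gr_trans _ _ ([:: (c, true); (b, true)] ++ [:: (c, false); (c, true)])).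
  apply: gr_sym.
  rewrite -[X in gr_equiv _ X]cats0.
  apply: gr_cat; first apply: gr_refl.
  exact: (gr_free (c, false)).
apply: gr_sym.
change (gr_equiv ([:: (c * b * c^-1, true)] ++ [:: (c, true)])
   ([:: (c, true); (b, true); (c, false)] ++ [:: (c, true)])).
apply: gr_cat; [exact: gr_conj | apply: gr_refl].
Qed.

Lemma move c v : posw v ->
  gr_equiv ((c, true) :: v) (conjw c v ++ [:: (c, true)]).
Proof.
elim: v => [|[b [] ] v IH] //=; first by move=> _; apply: gr_refl.
move=> Hv.
apply: (@gr_trans _ _ ([:: (c * b * c^-1, true); (c, true)] ++ v)).
  change (gr_equiv ([:: (c, true); (b, true)] ++ v) ([:: (c * b * c^-1, true); (c, true)] ++ v)).
  apply: gr_cat; [exact: swap | apply: gr_refl].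
change (gr_equiv ([:: (c * b * c^-1, true)] ++ ((c, true) :: v))
  ([:: (c * b * c^-1, true)] ++ (conjw c v ++ [:: (c, true)]))).
apply: gr_cat; [apply: gr_refl | exact: IH].
Qed.

Lemma gather c u : posw u -> exists u', [/\ posw u',
  (size u' + count_mem (c, true) u = size u)%N &
  gr_equiv u (u' ++ nseq (count_mem (c, true) u) (c, true))].
Proof.
elim: u => [|x u IH] /=.
  by move=> _; exists [::]; split => //; apply: gr_refl.
case/andP => Hx Hu; have [u' [Pu' Su' Eu']] := IH Hu.
case: (eqVneq x (c, true)) => [-> | Hne] /=.
  exists (conjw c u'); split.
  - by rewrite /posw /conjw all_map; apply: sub_all Pu' => y.
  - by rewrite size_map addnS -Su'.
  rewrite add0n.
  apply: (@gr_trans _ _ ((c, true) :: (u' ++ nseq (count_mem (c, true) u) (c, true)))).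
    change (gr_equiv ([:: (c, true)] ++ u) ([:: (c, true)] ++ (u' ++ nseq (count_mem (c, true) u) (c, true)))).
    apply: gr_cat; [apply: gr_refl | exact: Eu'].
  have := move c Pu'.
  move=> E.
  change (gr_equiv (((c, true) :: u') ++ nseq (count_mem (c, true) u) (c, true))
     (conjw c u' ++ ([:: (c, true)] ++ nseq (count_mem (c, true) u) (c, true)))).
  rewrite catA; apply: gr_cat; [exact: E | apply: gr_refl].
exists (x :: u'); split.
- by rewrite /= Hx Pu'.
- by rewrite /= -Su' addSn.
change (gr_equiv ([:: x] ++ u) ([:: x] ++ (u' ++ nseq (count_mem (c, true) u) (c, true)))).
apply: gr_cat; [apply: gr_refl | exact: Eu'].
Qed.

Lemma kill c : gr_equiv (nseq #[c] (c, true)) [::].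
Proof.
apply: (@gr_trans _ _ [:: (c ^+ #[c], true)]).
  apply: gr_sym; exact: gr_pow_pos.
rewrite expg_order; exact: gr_unit.
Qed.

Definition bound := (#|{: gT * bool}| * #|gT|)%N.

Lemma reduce n : forall w, size w <= n -> posw w ->
  exists2 w', (size w' <= bound)%N & gr_equiv w w'.
Proof.
elim: n => [|n IH] w Hs Hp.
  by exists w; [apply: leq_trans Hs _ | apply: gr_refl].
case: (leqP (size w) bound) => Hb; first by exists w => //; apply: gr_refl.
have [x Hx] : exists x, (#|gT| <= count_mem x w)%N.
  suff /existsP[x Hx] : [exists x, (#|gT| <= count_mem x w)%N] by exists x.
  apply: contraT => /existsPn H.
  have : (size w <= bound)%N.
    apply: size_bound => x; have := H x; rewrite -ltnNge; exact: ltnW.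
  by rewrite leqNgt Hb.
case: x Hx => c t Hx.
have Ht : t = true.
  case: t Hx => // Hx; exfalso.
  have H0 : count_mem (c, false) w = 0%N.
    by apply/count_memPn; apply/negP => /(allP Hp).
  have := max_card (pred1 (1 : gT)); rewrite card1.
  by rewrite H0 leqn0 in Hx; rewrite (eqP Hx).
subst t.
have [u' [Pu' Su' Eu']] := gather c Hp.
set k := count_mem (c, true) w in Su' Eu' Hx.
have Hord : (#[c] <= k)%N by apply: leq_trans Hx; exact: max_card.
have Ho : (0 < #[c])%N := order_gt0 c.
have E2 : gr_equiv w (u' ++ nseq (k - #[c]) (c, true)).
  apply: (gr_trans Eu').
  rewrite -(subnK Hord) nseqD catA.
  rewrite -[X in gr_equiv _ X]cats0.
  apply: gr_cat; [| exact: kill].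
  rewrite subnK //; rewrite -(subnK Hord) addnK; apply: gr_refl.
have [w'' H1 H2] : exists2 w', (size w' <= bound)%N & gr_equiv (u' ++ nseq (k - #[c]) (c, true)) w'.
  apply: IH.
    rewrite size_cat size_nseq -ltnS; apply: leq_trans Hs.
    rewrite -Su' -addnS leq_add2l.
    by rewrite ltn_subrL Ho (leq_trans Ho Hord).
  by rewrite /posw all_cat; apply/andP; split => //; rewrite all_nseq orbT.
by exists w''; [ | exact: gr_trans E2 H2].
Qed.

Definition topos w : gr_word gT :=
  map (fun x : gT * bool => if x.2 then x else (x.1^-1, true)) w.

Lemma topos_equiv w : gr_equiv w (topos w).
Proof.
elim: w => [|[a t] w IH] /=; first apply: gr_refl.
change (gr_equiv ([:: (a, t)] ++ w) ([:: if t then (a, t) else (a^-1, true)] ++ topos w)).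
apply: gr_cat => //; case: t; first by apply: gr_refl.
apply: gr_sym; have := gr_pow_neg a 1; rewrite expg1; exact.
Qed.

Lemma topos_pos w : posw (topos w).
Proof. by elim: w => [|[a []] w IH] //=. Qed.

End Proof.

Theorem mainTheorem12 (gT : finGroupType) : GrPq_finite gT.
Proof.
exists (flatten [seq [seq val t | t <- enum {: n.-tuple (gT * bool)}] | n <- iota 0 (bound gT).+1]).
move=> w.
have [w' Hs E] := reduce (leqnn _) (topos_pos w).
exists w'; last exact: gr_trans (topos_equiv w) E.
apply/flattenP; exists [seq val t | t <- enum {: (size w').-tuple (gT * bool)}].
  by apply/mapP; exists (size w'); rewrite // mem_iota add0n ltnS.
by apply/mapP; exists (in_tuple w'); rewrite ?mem_enum.
Qed.
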